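(* A ternary matrix $M$ is a (strong) lonesum matrix if and only if each of its $2\times 2$ submatrices is equivalent to a matrix of one of the forms $$\begin{pmatrix}2&2\\c&d\end{pmatrix},\quad \begin{pmatrix}2&b\\2&d\end{pmatrix},\quad \begin{pmatrix}2&b\\c&0\end{pmatrix},\quad \begin{pmatrix}a&b\\0&0\end{pmatrix},\quad \begin{pmatrix}a&0\\c&0\end{pmatrix},$$ where $a,b,c,d\in\{0,1,2\}$.
   Context: A ternary matrix is a matrix with all entries in $\{0,1,2\}$. A ternary $m\times n$ matrix $M$ is a (strong) lonesum matrix if no other ternary $m\times n$ matrix has the same row sums and the same column sums as $M$. A $2\times 2$ submatrix is the matrix formed by the entries in the intersection of two chosen rows and two chosen columns. Two matrices are equivalent if one can be obtained from the other by permuting rows and permuting columns. *)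

(* Defs.v *)
From mathcomp Require Import all_boot all_order all_algebra all_fingroup.
Set Implicit Arguments.
Unset Strict Implicit.
Unset Printing Implicit Defensive.

Definition ternary (m n : nat) (M : 'M[nat]_(m, n)) : Prop :=
  forall i j, M i j <= 2.

Definition row_sum (m n : nat) (M : 'M[nat]_(m, n)) (i : 'I_m) : nat :=
  \sum_(j < n) M i j.
Definition col_sum (m n : nat) (M : 'M[nat]_(m, n)) (j : 'I_n) : nat :=
  \sum_(i < m) M i j.

Definition lonesum (m n : nat) (M : 'M[nat]_(m, n)) : Prop :=
  forall N : 'M[nat]_(m, n), ternary N ->
    (forall i, row_sum N i = row_sum M i) ->
    (forall j, col_sum N j = col_sum M j) -> N = M.

Definition submx2 (m n : nat) (M : 'M[nat]_(m, n)) (i1 i2 : 'I_m) (j1 j2 : 'I_n)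
  : 'M[nat]_2 :=
  \matrix_(k < 2, l < 2)
    M (if k == ord0 then i1 else i2) (if l == ord0 then j1 else j2).

Definition mx_equiv (m n : nat) (A B : 'M[nat]_(m, n)) : Prop :=
  exists (s : 'S_m) (t : 'S_n), B = row_perm s (col_perm t A).

Definition good_form (A : 'M[nat]_2) : Prop :=
  let i0 : 'I_2 := ord0 in let i1 : 'I_2 := ord_max in
  (A i0 i0 = 2 /\ A i0 i1 = 2) \/
  (A i0 i0 = 2 /\ A i1 i0 = 2) \/
  (A i0 i0 = 2 /\ A i1 i1 = 0) \/
  (A i1 i0 = 0 /\ A i1 i1 = 0) \/
  (A i0 i1 = 0 /\ A i1 i1 = 0).

(* Main.v *)
Require Import Defs.
From mathcomp Require Import all_boot all_order all_algebra all_fingroup.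
Set Implicit Arguments. Unset Strict Implicit. Unset Printing Implicit Defensive.

Definition noswb (a b c d : nat) : bool :=
  ~~ [&& a < 2, d < 2, 0 < b & 0 < c] && ~~ [&& 0 < a, 0 < d, b < 2 & c < 2].
Definition goodb (p q r s : nat) : bool :=
  [|| (p == 2) && (q == 2), (p == 2) && (r == 2), (p == 2) && (s == 0),
      (r == 0) && (s == 0) | (q == 0) && (s == 0)].
Definition Gb a b c d := [|| goodb a b c d, goodb b a d c, goodb c d a b | goodb d c b a].

Lemma Gb_nosw a b c d : a <= 2 -> b <= 2 -> c <= 2 -> d <= 2 -> Gb a b c d = noswb a b c d.
Proof.
by case: a => [|[|[|a]]] //; case: b => [|[|[|b]]] //; case: c => [|[|[|c]]] //; case: d => [|[|[|d]]].
Qed.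

Lemma goodP (B : 'M[nat]_2) : good_form B <->
  goodb (B ord0 ord0) (B ord0 ord_max) (B ord_max ord0) (B ord_max ord_max).
Proof.
rewrite /good_form /goodb; split.
- by case=> [[-> ->]|[[-> ->]|[[-> ->]|[[-> ->]|[-> ->]]]]]; rewrite ?orbT.
- case/orP=> [/andP[/eqP-> /eqP->]|]; first by left.
  case/orP=> [/andP[/eqP-> /eqP->]|]; first by right; left.
  case/orP=> [/andP[/eqP-> /eqP->]|]; first by right; right; left.
  case/orP=> [/andP[/eqP-> /eqP->]|/andP[/eqP-> /eqP->]]; first by right; right; right; left.
  by right; right; right; right.
Qed.

Lemma perm2 (s : 'S_2) : s = 1%g \/ s = tperm ord0 ord_max.
Proof.
have inj := @perm_inj _ s.
have hi : forall i : 'I_2, i = ord0 \/ i = ord_max.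
  by case=> [[|[|k]] Hk] //; [left|right]; apply/val_inj.
have ne : ord0 != ord_max :> 'I_2 by [].
case: (hi (s ord0)) => h0.
- left; apply/permP => i; rewrite perm1.
  case: (hi i) => -> //.
  case: (hi (s ord_max)) => h1; rewrite h1 //.
  by move: h1; rewrite -h0 => /inj.
- right; apply/permP => i.
  case: (hi i) => ->; first by rewrite tpermL.
  rewrite tpermR.
  case: (hi (s ord_max)) => h1; rewrite h1 //.
  by move: h1; rewrite -h0 => /inj.
Qed.

Lemma entry (A : 'M[nat]_2) s t i j : row_perm s (col_perm t A) i j = A (s i) (t j).
Proof. by rewrite !mxE. Qed.

Definition GbA (A : 'M[nat]_2) :=
  Gb (A ord0 ord0) (A ord0 ord_max) (A ord_max ord0) (A ord_max ord_max).

Lemma exists_good (A : 'M[nat]_2) : GbA A -> exists B, mx_equiv A B /\ good_form B.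
Proof.
rewrite /GbA /Gb.
case/or4P => h.
- exists (row_perm 1%g (col_perm 1%g A)); split; first by exists 1%g, 1%g.
  by apply/goodP; rewrite !entry !perm1.
- exists (row_perm 1%g (col_perm (tperm ord0 ord_max) A)); split; first by exists 1%g, (tperm ord0 ord_max).
  by apply/goodP; rewrite !entry !perm1 tpermL tpermR.
- exists (row_perm (tperm ord0 ord_max) (col_perm 1%g A)); split; first by exists (tperm ord0 ord_max), 1%g.
  by apply/goodP; rewrite !entry !perm1 tpermL tpermR.
- exists (row_perm (tperm ord0 ord_max) (col_perm (tperm ord0 ord_max) A)); split.
    by exists (tperm ord0 ord_max), (tperm ord0 ord_max).
  by apply/goodP; rewrite !entry tpermL tpermR.
Qed.

Lemma good_Gb (A B : 'M[nat]_2) : mx_equiv A B -> good_form B -> GbA A.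
Proof.
case=> s [t ->] /goodP; rewrite !entry /GbA /Gb.
by case: (perm2 s) => ->; case: (perm2 t) => ->; rewrite ?perm1 ?tpermL ?tpermR => ->; rewrite ?orbT.
Qed.

Definition sw m n (M : 'M[nat]_(m, n)) i1 i2 j1 j2 : bool :=
  [&& M i1 j1 < 2, M i2 j2 < 2, 0 < M i1 j2 & 0 < M i2 j1].

Lemma sum_swap n (F G : 'I_n -> nat) a b : a != b -> F a = (G a).+1 -> G b = (F b).+1 ->
  (forall j, j != a -> j != b -> F j = G j) -> \sum_j F j = \sum_j G j.
Proof.
move=> ab Fa Gb' eq.
have dec : forall H : 'I_n -> nat, \sum_j H j =
    H a + (H b + \sum_(j | (j != a) && (j != b)) H j).
  move=> H; rewrite (bigD1 a) //= (bigD1 b) //=; last by rewrite eq_sym.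
  idtac.
rewrite dec [RHS]dec Fa Gb' (eq_bigr (fun j => G j)); last by move=> j /andP[ja jb]; apply: eq.
by rewrite !addSn !addnS.
Qed.

Lemma lonesum_nosw m n (M : 'M[nat]_(m, n)) : ternary M -> lonesum M ->
  forall i1 i2 j1 j2, i1 != i2 -> j1 != j2 -> ~~ sw M i1 i2 j1 j2.
Proof.
move=> tM ls i1 i2 j1 j2 nei nej; apply/negP => /and4P[L1 L2 H1 H2].
pose Nf (i : 'I_m) (j : 'I_n) := (if ((i == i1) && (j == j1)) || ((i == i2) && (j == j2))
   then (M i j).+1 else if ((i == i1) && (j == j2)) || ((i == i2) && (j == j1))
   then (M i j).-1 else M i j).
pose N : 'M[nat]_(m, n) := (\matrix_(i, j) Nf i j)%R.
have nei' : (i2 == i1) = false by rewrite eq_sym (negbTE nei).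
have nej' : (j2 == j1) = false by rewrite eq_sym (negbTE nej).
have nei'' := negbTE nei; have nej'' := negbTE nej.
have E11 : N i1 j1 = (M i1 j1).+1 by rewrite mxE /Nf !eqxx.
have E22 : N i2 j2 = (M i2 j2).+1 by rewrite mxE /Nf !eqxx orbT.
have E12 : (M i1 j2) = (N i1 j2).+1.
  by rewrite mxE /Nf !eqxx nei'' nej' /= prednK.
have E21 : (M i2 j1) = (N i2 j1).+1.
  by rewrite mxE /Nf !eqxx nei' nej'' /= ?orbT prednK.
have Eo : forall i j, ~~ (((i == i1) || (i == i2)) && ((j == j1) || (j == j2))) -> N i j = M i j.
  move=> i j; rewrite mxE /Nf negb_and !negb_or.
  by case: (i == i1); case: (i == i2); case: (j == j1); case: (j == j2).
have : N = M.
  apply: ls.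
  - move=> i j; rewrite mxE /Nf.
    case: ifP => [/orP[/andP[/eqP-> /eqP->]|/andP[/eqP-> /eqP->]] //|_].
    case: ifP => _; last exact: tM.
    by rewrite (leq_trans (leq_pred _)) // tM.
  - move=> i; rewrite /row_sum.
    case: (eqVneq i i1) => [->|ni1].
      apply: (sum_swap (a := j1) (b := j2)) => // j ja jb.
      by apply: Eo; rewrite (negbTE ja) (negbTE jb) !orbF andbF.
    case: (eqVneq i i2) => [->|ni2].
      apply: (sum_swap (a := j2) (b := j1)) => //; first by rewrite eq_sym.
      move=> j ja jb.
      by apply: Eo; rewrite (negbTE ja) (negbTE jb) !orbF andbF.
    by apply: eq_bigr => j _; apply: Eo; rewrite (negbTE ni1) (negbTE ni2).
  - move=> j; rewrite /col_sum.
    case: (eqVneq j j1) => [->|nj1].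
      apply: (sum_swap (a := i1) (b := i2)) => // i ia ib.
      by apply: Eo; rewrite (negbTE ia) (negbTE ib).
    case: (eqVneq j j2) => [->|nj2].
      apply: (sum_swap (a := i2) (b := i1)) => //; first by rewrite eq_sym.
      move=> i ia ib.
      by apply: Eo; rewrite (negbTE ia) (negbTE ib).
    by apply: eq_bigr => i _; apply: Eo; rewrite (negbTE nj1) (negbTE nj2) andbF.
move/matrixP/(_ i1 j1); rewrite E11 => /eqP.
by rewrite eqn_leq ltnn.
Qed.

Fixpoint walkP m n (M : 'M[nat]_(m, n)) (r0 : 'I_m) (d : 'I_n) (w : seq ('I_m * 'I_n)) : bool :=
  match w with
  | [::] => M r0 d < 2
  | (r, d') :: w' => [&& M r d < 2, 0 < M r d' & walkP M r0 d' w']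
  end.

Lemma cyc m n (M : 'M[nat]_(m, n)) :
  (forall i1 i2 j1 j2, i1 != i2 -> j1 != j2 -> ~~ sw M i1 i2 j1 j2) ->
  forall w r0 r1 d0 d1, r0 != r1 -> r0 \notin map fst w -> d0 != d1 ->
  uniq (d1 :: map snd w) -> 0 < M r0 d0 -> M r1 d0 < 2 -> 0 < M r1 d1 ->
  walkP M r0 d1 w -> False.
Proof.
move=> nsw; elim=> [|[r2 d2] w IH] r0 r1 d0 d1 ne01 nr ned ud H00 L10 H11 wk.
  have := nsw r1 r0 d0 d1; rewrite eq_sym ne01 ned => /(_ isT isT).
  by rewrite /sw L10 H11 H00 /= andbT; move: wk => /= ->.
case L01 : (M r0 d1 < 2).
  have := nsw r1 r0 d0 d1; rewrite eq_sym ne01 ned => /(_ isT isT).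
  by rewrite /sw L10 H11 H00 L01.
have H01 : 0 < M r0 d1 by move: L01; rewrite ltnNge => /negbFE; apply: leq_trans.
move: wk => /= /and3P[L21 H22 wk].
move: nr; rewrite /= inE negb_or => /andP[ne02 nr].
move: ud => /andP[]; rewrite inE negb_or => /andP[ne12 _] ud.
exact: (IH r0 r2 d1 d2 ne02 nr ne12 ud H01 L21 H22 wk).
Qed.

Lemma sum_lt n (F G : 'I_n -> nat) j0 : \sum_j F j = \sum_j G j -> F j0 < G j0 ->
  exists j, G j < F j.
Proof.
move=> eqs lt0.
case: (pickP (fun j => G j < F j)) => [j ?|h]; first by exists j.
exfalso.
have : \sum_j F j < \sum_j G j.
  rewrite (bigD1 j0) //= [X in _ < X](bigD1 j0) //=.
  by rewrite -addSn leq_add // leq_sum // => j _; rewrite leqNgt h.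
by rewrite eqs ltnn.
Qed.

Lemma nosw_lonesum m n (M : 'M[nat]_(m, n)) : ternary M ->
  (forall i1 i2 j1 j2, i1 != i2 -> j1 != j2 -> ~~ sw M i1 i2 j1 j2) -> lonesum M.
Proof.
move=> tM nsw N tN rs cs.
case: (eqVneq N M) => // neq; exfalso.
have [r0 [c0 P0]] : exists i j, M i j < N i j.
  case: (pickP (fun ij : 'I_m * 'I_n => N ij.1 ij.2 != M ij.1 ij.2)) => [[i j] /= ne|hh].
    case: (ltngtP (M i j) (N i j)) => [lt|lt|e]; first by exists i, j.
    - have [j' ?] := sum_lt (F := fun j => N i j) (G := fun j => M i j) (rs i) lt.
      by exists i, j'.
    - by rewrite e eqxx in ne.
  move/eqP: neq; case; apply/matrixP => i j; apply/eqP.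
  by have := hh (i, j); rewrite /= => /negbFE.
pose g (i : 'I_m) : 'I_n := odflt c0 [pick j | N i j < M i j].
pose f (j : 'I_n) : 'I_m := odflt r0 [pick i | M i j < N i j].
pose h i := f (g i).
have gQ : forall i j, M i j < N i j -> N i (g i) < M i (g i).
  move=> i j lt; rewrite /g; case: pickP => [j' //|hh].
  have [j' hj] := sum_lt (F := fun j => M i j) (G := fun j => N i j) (esym (rs i)) lt.
  by rewrite hh in hj.
have fP : forall i j, N i j < M i j -> M (f j) j < N (f j) j.
  move=> i j lt; rewrite /f; case: pickP => [i' //|hh].
  have [i' hi] := sum_lt (F := fun i => N i j) (G := fun i => M i j) (cs j) lt.
  by rewrite hh in hi.
pose X t := iter t h r0.
have act : forall t, exists j, M (X t) j < N (X t) j.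
  elim=> [|t [j IH]]; first by exists c0.
  exists (g (X t)); rewrite /X iterS; exact: fP _ _ (gQ _ _ IH).
have Q : forall t, N (X t) (g (X t)) < M (X t) (g (X t)).
  by move=> t; have [j lt] := act t; exact: gQ lt.
have P : forall t, M (X t.+1) (g (X t)) < N (X t.+1) (g (X t)).
  by move=> t; exact: fP _ _ (Q t).
have exb : exists b, [exists a : 'I_b, X a == X b].
  have : ~~ injectiveb (fun t : 'I_m.+1 => X t).
    apply/negP => /injectiveP inj; have := leq_card _ inj.
    by rewrite !card_ord ltnn.
  case/injectivePn => x [y nxy exy].
  case: (ltngtP x y) => [xy|yx|e].
  - by exists y; apply/existsP; exists (Ordinal xy); rewrite /= exy.
  - by exists x; apply/existsP; exists (Ordinal yx); rewrite /= exy.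
  - by move/eqP: nxy; case; apply: val_inj.
case: (ex_minnP exb) => b /existsP [a /eqP eab] minb.
have ab : a < b := ltn_ord a.
have Xd : forall s t, s < t -> t < b -> X s != X t.
  move=> s t st tb; apply/negP => /eqP e.
  have : b <= t by apply: minb; apply/existsP; exists (Ordinal st); rewrite /= e.
  by rewrite leqNgt tb.
pose k := b - a.
pose Y t := X (a + t).
have Yk : Y k = Y 0 by rewrite /Y /k subnKC ?(ltnW ab) // addn0 eab.
have ltk : forall t, (t < k) = (a + t < b) by move=> t; rewrite /k ltn_subRL.
have Yinj : forall s t, s < k -> t < k -> Y s = Y t -> s = t.
  move=> s t; rewrite !ltk /Y => sk tk e; case: (ltngtP s t) => // st.
  - by have := Xd (a + s) (a + t); rewrite ltn_add2l st tk e eqxx => /(_ isT isT).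
  - by have := Xd (a + t) (a + s); rewrite ltn_add2l st sk e eqxx => /(_ isT isT).
have HQ : forall t, 0 < M (Y t) (g (Y t)).
  by move=> t; exact: leq_ltn_trans (leq0n _) (Q _).
have LP : forall t, M (Y t.+1) (g (Y t)) < 2.
  by move=> t; rewrite /Y addnS; exact: leq_trans (P _) (tN _ _).
have YS : forall t, Y t.+1 = f (g (Y t)) by move=> t; rewrite /Y addnS.
have k0 : 0 < k by rewrite /k subn_gt0.
have k2 : 1 < k.
  rewrite ltn_neqAle k0 andbT; apply/eqP => k1.
  have e : Y 1 = Y 0 by rewrite k1 Yk.
  have q : N (Y 0) (g (Y 0)) < M (Y 0) (g (Y 0)) := Q (a + 0).
  have p : M (Y 1) (g (Y 0)) < N (Y 1) (g (Y 0)) by rewrite /Y addnS; exact: P.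
  by rewrite e in p; move: q; rewrite ltnNge (ltnW p).
pose D t := g (Y t).
have Ymod : forall s, s < k -> Y s.+1 = Y (if s.+1 == k then 0 else s.+1).
  by move=> s sk; case: eqP => // ->; exact: Yk.
have lt_if : forall s, s < k -> (if s.+1 == k then 0 else s.+1) < k.
  by move=> s sk; case: eqP => [_|/eqP ne] //; rewrite ltn_neqAle ne sk.
have Dinj : forall s t, s < k -> t < k -> D s = D t -> s = t.
  move=> s t sk tk e.
  have : Y s.+1 = Y t.+1 by rewrite !YS -/(D s) -/(D t) e.
  rewrite (Ymod s sk) (Ymod t tk) => /(Yinj _ _ (lt_if s sk) (lt_if t tk)).
  case: eqP => es; case: eqP => et //.
  - by move=> _; apply: succn_inj; rewrite es et.
  - by case.
have walk : forall c s, s.+1 + c = k ->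
    walkP M (Y 0) (D s) [seq (Y t, D t) | t <- iota s.+1 c].
  elim=> [|c IHc] s e /=.
    by rewrite addn0 in e; rewrite -Yk -e; exact: LP s.
  rewrite (LP s) (HQ s.+1) /=; apply: IHc; by rewrite addSnnS.
have k22 : 2 + (k - 2) = k by rewrite subnKC.
apply: (cyc nsw (w := [seq (Y t, D t) | t <- iota 2 (k - 2)]) (r0 := Y 0) (r1 := Y 1)
  (d0 := D 0) (d1 := D 1)).
- by apply/eqP => /(Yinj 0 1 k0 k2).
- rewrite -map_comp; apply/mapP => [[t]]; rewrite mem_iota k22 => /andP[t2 tk] /=.
  by move/(Yinj 0 t k0 tk) => t0; rewrite -t0 in t2.
- by apply/eqP => /(Dinj 0 1 k0 k2).
- have -> : D 1 :: [seq x.2 | x <- [seq (Y t, D t) | t <- iota 2 (k - 2)]] =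
            map D (iota 1 (k - 1)).
    by rewrite -map_comp; have -> : k - 1 = (k - 2).+1 by rewrite -subSn.
  rewrite map_inj_in_uniq ?iota_uniq // => s t; rewrite !mem_iota add1n.
  have -> : (k - 1).+1 = k by rewrite subn1 prednK.
  by move=> /andP[_ sk] /andP[_ tk]; apply: Dinj.
- exact: HQ 0.
- exact: LP 0.
- exact: HQ 1.
- exact: walk (k - 2) 1 k22.
Qed.

Lemma swC m n (M : 'M[nat]_(m, n)) i1 i2 j1 j2 : sw M i1 i2 j1 j2 = sw M i2 i1 j2 j1.
Proof.
by rewrite /sw; case: (M i1 j1 < 2); case: (M i2 j2 < 2); case: (0 < M i1 j2); case: (0 < M i2 j1).
Qed.

Lemma GbA_sub m n (M : 'M[nat]_(m, n)) i1 i2 j1 j2 : ternary M ->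
  GbA (submx2 M i1 i2 j1 j2) = noswb (M i1 j1) (M i1 j2) (M i2 j1) (M i2 j2).
Proof. by move=> tM; rewrite /GbA /submx2 !mxE /=; apply: Gb_nosw; apply: tM. Qed.

Theorem theorem3p1 (m n : nat) (M : 'M[nat]_(m, n)) :
  ternary M ->
  (lonesum M <->
   (forall (i1 i2 : 'I_m) (j1 j2 : 'I_n), i1 < i2 -> j1 < j2 ->
      exists B : 'M[nat]_2, mx_equiv (submx2 M i1 i2 j1 j2) B /\ good_form B)).
Proof.
move=> tM; split.
- move=> ls i1 i2 j1 j2 lti ltj.
  apply: exists_good.
  have nei : i1 != i2 by apply/eqP => e; rewrite e ltnn in lti.
  have nej : j1 != j2 by apply/eqP => e; rewrite e ltnn in ltj.
  have h1 := lonesum_nosw tM ls nei nej.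
  rewrite eq_sym in nei.
  have h2 := lonesum_nosw tM ls nei nej.
  rewrite (GbA_sub _ _ _ _ tM) /noswb.
  apply/andP; split; first exact: h1.
  apply/negP => /and4P[a b c d]; move/negP: h2; apply.
  by rewrite /sw a b c d.
- move=> H; apply: (nosw_lonesum tM) => i1 i2 j1 j2 nei nej.
  have srt : forall (i1 i2 : 'I_m) (j1 j2 : 'I_n), i1 < i2 -> j1 < j2 ->
      ~~ sw M i1 i2 j1 j2 && ~~ sw M i2 i1 j1 j2.
    move=> k1 k2 l1 l2 lti ltj; have [B [eqAB gB]] := H _ _ _ _ lti ltj.
    have := good_Gb eqAB gB.
    rewrite (GbA_sub _ _ _ _ tM) /noswb => /andP[h1 h2].
    apply/andP; split; first exact: h1.
    apply/negP => /and4P[a b c d]; move/negP: h2; apply.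
    by rewrite a b c d.
  case: (ltngtP i1 i2) => [lti|lti|e]; last first.
    by move/val_inj: e nei => ->; rewrite eqxx.
  all: case: (ltngtP j1 j2) => [ltj|ltj|e]; last first;
    try by move/val_inj: e nej => ->; rewrite eqxx.
  all: first [ by case/andP: (srt _ _ _ _ lti ltj)
             | by rewrite swC; case/andP: (srt _ _ _ _ lti ltj) ].
Qed.
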